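(* Let $q$ be a prime power and $n,k,\delta,\alpha$ positive integers with $k\le n$, $3\le\alpha\le\left[{k\atop 1}\right]_q$ and $\delta\ge(\alpha-1)(k-1)+1$. Then $$B_q(n,k,\delta;\alpha)\le(\alpha-1)\frac{\left[{n\atop 1}\right]_q}{\left[{k\atop 1}\right]_q+1}.$$
   Context: For a prime power $q$, $\mathcal{G}_q(n,k)$ denotes the set of all $k$-dimensional subspaces of $\mathbb{F}_q^n$, and the Gaussian binomial coefficient is $\left[{n\atop k}\right]_q=\prod_{i=0}^{k-1}\frac{q^n-q^i}{q^k-q^i}$; in particular $\left[{n\atop 1}\right]_q=\frac{q^n-1}{q-1}$. An $\alpha$-$(n,k,\delta)_q^c$ covering Grassmannian code is a subset $\mathcal{C}\subseteq\mathcal{G}_q(n,k)$ (no repeated codewords) such that every set of $\alpha$ distinct codewords of $\mathcal{C}$ spans a subspace of $\mathbb{F}_q^n$ of dimension at least $k+\delta$. $B_q(n,k,\delta;\alpha)$ denotes the maximum size of an $\alpha$-$(n,k,\delta)_q^c$ code. *)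

(* Defs.v *)
From HB Require Import structures.
From mathcomp Require Import all_boot all_order all_algebra all_field.
Unset Printing Implicit Defensive.
Import GRing.Theory Num.Theory.
Local Open Scope ring_scope.

Definition gauss1 (q m : nat) : rat := ((q ^ m)%:R - 1) / (q%:R - 1).

Definition covering_code (F : finFieldType) (n k delta alpha : nat)
    (C : seq {vspace 'rV[F]_n}) : Prop :=
  uniq C /\
  (forall U, U \in C -> \dim U = k) /\
  (forall S : seq {vspace 'rV[F]_n},
      uniq S -> size S = alpha -> {subset S <= C} ->
      (k + delta <= \dim (\sum_(U <- S) U)%VS)%N).

(* Main.v *)
Require Import Defs.
From HB Require Import structures.
From mathcomp Require Import all_boot all_order all_algebra all_field.
From mathcomp Require Import zify ring.
Import GRing.Theory Num.Theory.
Local Open Scope ring_scope.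


Lemma mem_sum_seq (F : finFieldType) (n : nat) (S : seq {vspace 'rV[F]_n}) U x :
  U \in S -> x \in U -> x \in (\sum_(W <- S) W)%VS.
Proof.
elim: S => [//|W S IH]; rewrite inE big_cons => /orP[/eqP<- xU|US xU].
  by have /subvP := addvSl U (\sum_(W <- S) W)%VS; apply.
by have /subvP := addvSr W (\sum_(W <- S) W)%VS; apply; apply: IH.
Qed.

Lemma dim_common (F : finFieldType) (n : nat) (k : nat) (S : seq {vspace 'rV[F]_n}) (v : 'rV[F]_n) : v != 0 ->
  (forall U, U \in S -> \dim U = k /\ v \in U) -> S != [::] ->
  (\dim (\sum_(U <- S) U)%VS <= size S * (k - 1) + 1)%N.
Proof.
move=> vnz; elim: S => [//|U S IH] hS _.
have [dU vU] := hS U (mem_head _ _).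
rewrite big_cons /=.
case: S IH hS => [|U2 S] IH hS.
  by rewrite big_nil addv0 dU /=; lia.
have IH' := IH (fun W WS => hS W (mem_behead (s:=U :: U2 :: S) WS)) isT.
set A := (\sum_(W <- U2 :: S) W)%VS in IH' *.
have vA : v \in A.
  rewrite /A. apply: (@mem_sum_seq F n (U2 :: S) U2 v (mem_head _ _)).
  by case: (hS U2); rewrite ?inE ?eqxx ?orbT.
have cap1 : (1 <= \dim (U :&: A))%N.
  have := dimvS (_ : (<[v]> <= U :&: A)%VS).
  rewrite dim_vline vnz; apply; rewrite -memvE memv_cap vU vA //.
have := dimv_sum_cap U A; rewrite dU /=.
move: IH'; rewrite /=. lia.
Qed.


Lemma clash (F : finFieldType) (n k delta alpha : nat) C
  (hC : covering_code F n k delta alpha C) (hk : (0 < k)%N) (ha : (2 <= alpha)%N)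
  (hdelta : ((alpha - 1) * (k - 1) + 1 <= delta)%N)
  (K : seq {vspace 'rV[F]_n}) (v : 'rV[F]_n) W w :
  v != 0 -> uniq K -> size K = (alpha - 1)%N -> {subset K <= C} ->
  (forall U, U \in K -> v \in U) -> W \in C -> W \notin K -> w != 0 -> w \in W ->
  w \in (\sum_(U <- K) U)%VS -> False.
Proof.
move=> vnz uK sK KC vK WC WK wnz wW wA.
case: hC => _ [hdim hcov].
have := hcov (W :: K).
have u1 : uniq (W :: K) by rewrite /= WK uK.
have s1 : size (W :: K) = alpha by rewrite /= sK; lia.
have c1 : {subset W :: K <= C} by move=> U; rewrite inE => /orP[/eqP->|/KC].
move=> /(_ u1 s1 c1).
rewrite big_cons.
set A := (\sum_(U <- K) U)%VS.
have KnE : K != [::] by apply/eqP=> K0; move: sK; rewrite K0 /=; lia.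
have dA := @dim_common F n k K v vnz (fun U UK => conj (hdim U (KC U UK)) (vK U UK)) KnE.
have cap1 : (1 <= \dim (W :&: A))%N.
  have := dimvS (_ : (<[w]> <= W :&: A)%VS).
  rewrite dim_vline wnz; apply; rewrite -memvE memv_cap wW wA //.
have := dimv_sum_cap W A; rewrite (hdim W WC) -/A.
move: dA; rewrite -/A sK; lia.
Qed.

Lemma card_setvs (F : finFieldType) (n : nat) (U : {vspace 'rV[F]_n}) :
  #|[set x in U]| = (#|F| ^ \dim U)%N.
Proof. by rewrite cardsE card_vspace. Qed.

Lemma sum_in_U (F : finFieldType) (n k : nat) (U : {vspace 'rV[F]_n}) (Z : {set 'rV[F]_n}) :
  0 \in Z -> (forall x, x \in U -> x \in Z -> x = 0) -> \dim U = k ->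
  (\sum_(x in ~: Z) (x \in U : nat) = #|F| ^ k - 1)%N.
Proof.
move=> Z0 UZ dU.
rewrite (eq_bigr (fun x => if x \in U then 1 else 0)%N); last by move=> x _; case: (x \in U).
rewrite -big_mkcondr sum1dep_card.
have -> : [set x | (x \in ~: Z) && (x \in U)] = [set x in U] :\ 0.
  apply/setP=> x; rewrite !inE; case xU: (x \in U); rewrite ?andbF ?andbT //.
  case: (eqVneq x 0) => [->|xnz]; first by rewrite Z0.
  by apply/negP => xZ; move: xnz; rewrite (UZ x xU xZ) eqxx.
have := cardsD1 0 [set x in U]; rewrite card_setvs dU inE mem0v /= => ->; by rewrite addKn.
Qed.

Lemma sum_count (F : finFieldType) (n k : nat) (D : seq {vspace 'rV[F]_n}) (Z : {set 'rV[F]_n}) :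
  0 \in Z -> (forall U, U \in D -> \dim U = k /\ (forall x, x \in U -> x \in Z -> x = 0)) ->
  (\sum_(x in ~: Z) count (fun U : {vspace 'rV[F]_n} => x \in U) D = size D * (#|F| ^ k - 1))%N.
Proof.
move=> Z0; elim: D => [|U D IH] hD /=.
  by rewrite big1.
rewrite big_split /= IH; last by move=> W WD; apply: hD; rewrite inE WD orbT.
have [dU UZ] := hD U (mem_head _ _).
by rewrite (@sum_in_U F n k U Z Z0 UZ dU) mulSn.
Qed.

Lemma arith2 (s N A B a : nat) : (3 <= a)%N -> (a * B <= A)%N ->
  (s * A <= N * (a - 2))%N -> (s * (A + B) <= (a - 1) * N)%N.
Proof.
move=> a3 aBA sA.
have sB : (s * B <= N)%N.
  have h1 : (s * B * (a - 2) <= N * (a - 2))%N.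
    apply: leq_trans sA; rewrite -mulnA leq_mul2l; apply/orP; right.
    apply: leq_trans aBA; rewrite mulnC leq_mul2r; apply/orP; right; lia.
  by rewrite leq_pmul2r in h1; lia.
nia.
Qed.

Lemma arith1 (s s' X N N' Y a : nat) : (s <= s' + (a - 1))%N ->
  (s' * X <= (a - 1) * N')%N -> (X <= Y)%N -> N = (Y + N')%N ->
  (s * X <= (a - 1) * N)%N.
Proof. move=> h1 h2 h3 ->; nia. Qed.

Lemma arith3 (q k d : nat) : (1 < q)%N -> (0 < k)%N -> (d <= k - 1)%N ->
  (q ^ k + q - 2 <= q ^ k + q ^ k - q ^ d - 1)%N.
Proof.
move=> q1 k0 dk.
have e : (q ^ k = q * q ^ (k - 1))%N by rewrite -expnS; congr (expn _ _); lia.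
have : (q ^ d <= q ^ (k - 1))%N by rewrite leq_exp2l.
have : (1 <= q ^ d)%N by rewrite expn_gt0; lia.
rewrite e; nia.
Qed.

Lemma arith4 (q k d Yc : nat) : (1 < q)%N -> (0 < k)%N -> (d <= k - 1)%N ->
  (Yc + q ^ d = q ^ k + q ^ k)%N -> (q ^ k - 1 + (q - 1) <= Yc - 1)%N.
Proof.
move=> q1 k0 dk e.
have := @arith3 q k d q1 k0 dk.

have : (1 <= q ^ k)%N by rewrite expn_gt0; lia.
lia.
Qed.

Lemma key (F : finFieldType) (n k delta alpha : nat) C
  (hC : covering_code F n k delta alpha C) (hk : (0 < k)%N) (ha : (3 <= alpha)%N)
  (hdelta : ((alpha - 1) * (k - 1) + 1 <= delta)%N)
  (hak : (alpha * (#|F| - 1) <= #|F| ^ k - 1)%N) (hq : (1 < #|F|)%N) :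
  forall (D : seq {vspace 'rV[F]_n}) (Z : {set 'rV[F]_n}),
  0 \in Z -> uniq D -> {subset D <= C} ->
  (forall U x, U \in D -> x \in U -> x \in Z -> x = 0) ->
  (size D * (#|F| ^ k - 1 + (#|F| - 1)) <= (alpha - 1) * #|~: Z|)%N.
Proof.
have hdim : forall U, U \in C -> \dim U = k by case: hC => _ [].
move=> D; have [m] := ubnP (size D); elim: m D => // m IH D ltDm Z Z0 uD DC DZ.
case: (boolP [exists x, (x != 0) && (alpha - 1 <= count (fun U : {vspace 'rV[F]_n} => x \in U) D)%N]).
- case/existsP => v /andP[vnz cnt].
  set L := filter (fun U : {vspace 'rV[F]_n} => v \in U) D.
  set K := take (alpha - 1) L.
  have sK : size K = (alpha - 1)%N by rewrite size_takel // size_filter.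
  have uK : uniq K by apply/take_uniq/filter_uniq.
  have KD : {subset K <= D} by move=> U /mem_take; rewrite mem_filter => /andP[].
  have vK : forall U, U \in K -> v \in U by move=> U /mem_take; rewrite mem_filter => /andP[].
  have KC : {subset K <= C} by move=> U /KD /DC.
  set D' := filter (fun U => U \notin K) D.
  have cntK : (1 <= count (mem K) D <= alpha - 1)%N.
    apply/andP; split.
      rewrite -has_count; apply/hasP; exists (nth 0%VS K 0).
        by apply: KD; apply: mem_nth; rewrite sK; clear -ha; lia.
      by rewrite /= mem_nth // sK; clear -ha; lia.
    rewrite -size_filter -sK; apply: uniq_leq_size; first exact: filter_uniq.
    by move=> U; rewrite mem_filter => /andP[].
  have szD : (size D' + count (mem K) D = size D)%N.
    by rewrite /D' size_filter addnC -(count_predC (mem K)).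
  have uD' : uniq D' by exact: filter_uniq.
  have D'D : forall U, U \in D' -> U \notin K /\ U \in D.
    by move=> U; rewrite mem_filter => /andP[].
  clearbody D' K.
  have [U1 [U2 [K' eK]]] : exists U1 U2 K', K = U1 :: U2 :: K'.
    move: sK ha; clear; case: (K) => [|a [|b t]] /= ; try lia; by exists a, b, t.
  rewrite eK in uK KD vK KC sK.
  have U12 : U1 != U2 by move: uK; rewrite /= inE negb_or => /andP[/andP[]].
  have U1C : U1 \in C by apply: KC; rewrite mem_head.
  have U2C : U2 \in C by apply: KC; rewrite !inE eqxx orbT.
  have U1D : U1 \in D by apply: KD; rewrite mem_head.
  have U2D : U2 \in D by apply: KD; rewrite !inE eqxx orbT.
  set Y := [set x in U1] :|: [set x in U2].
  set Z' := Z :|: Y.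
  have ltD' : (size D' < m)%N.
    move: cntK => /andP[c1 _]; move: szD ltDm c1; clear; lia.
  have Z'0 : 0 \in Z' by rewrite !inE Z0.
  have D'C : {subset D' <= C} by move=> U /D'D [_ /DC].
  have hZ' : forall U x, U \in D' -> x \in U -> x \in Z' -> x = 0.
    move=> U x /D'D [UK UD] xU.
    rewrite !inE => /orP[xZ|xY]; first exact: DZ xU xZ.
    apply/eqP; apply/negPn/negP => xnz.
    have sK2 : size (U1 :: U2 :: K') = (alpha - 1)%N by [].
    have UC : U \in C by apply: DC.
    have UK2 : U \notin U1 :: U2 :: K' by rewrite -eK.
    have xA : x \in (\sum_(W <- U1 :: U2 :: K') W)%VS.
      case/orP: xY => xU'.
        by apply: (@mem_sum_seq F n _ U1); rewrite ?inE ?eqxx ?orbT.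
      by apply: (@mem_sum_seq F n _ U2); rewrite ?inE ?eqxx ?orbT.
    exact: (@clash F n k delta alpha C hC hk (ltnW ha) hdelta (U1 :: U2 :: K') v U x
      vnz uK sK2 KC vK UC UK2 xnz xU xA).
  have IHD' := IH D' ltD' Z' Z'0 uD' D'C hZ'.
  have hNZ : #|~: Z| = (#|Y| - 1 + #|~: Z'|)%N.
    rewrite -(cardsID Y (~: Z)).
    have -> : ~: Z :\: Y = ~: Z'.
      apply/setP=> x; rewrite !inE; by case: (x \in Z); case: (x \in U1); case: (x \in U2).
    have -> : ~: Z :&: Y = Y :\ 0.
      apply/setP=> x; rewrite !inE.
      case: (eqVneq x 0) => [->|xnz]; first by rewrite Z0.
      case h: ((x \in U1) || (x \in U2)); rewrite ?andbF ?andbT //.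
      apply/negP => xZ; move: xnz; case/orP: h => h.
        by rewrite (DZ U1 x U1D h xZ) eqxx.
      by rewrite (DZ U2 x U2D h xZ) eqxx.
    have := cardsD1 0 Y; rewrite !inE mem0v /= => ->.
    by rewrite add1n subn1 /=.
  have dcap : (\dim (U1 :&: U2) <= k - 1)%N.
    rewrite leqNgt; apply/negP => hd.
    have hd' : (k <= \dim (U1 :&: U2))%N by move: hd; rewrite subn1 prednK.
    have e1 : (U1 :&: U2)%VS = U1.
      by apply/eqP; rewrite eqEdim capvSl (hdim U1 U1C) hd'.
    have e2 : (U1 :&: U2)%VS = U2.
      by apply/eqP; rewrite eqEdim capvSr (hdim U2 U2C) hd'.
    by move: U12; rewrite -{1}e1 e2 eqxx.
  have hYc : (#|Y| + #|F| ^ \dim (U1 :&: U2) = #|F| ^ k + #|F| ^ k)%N.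
    have c1 : #|[set x in U1]| = (#|F| ^ k)%N by rewrite card_setvs hdim.
    have c2 : #|[set x in U2]| = (#|F| ^ k)%N by rewrite card_setvs hdim.
    have ecap : [set x in (U1 :&: U2)%VS] = [set x in U1] :&: [set x in U2].
      by apply/setP => x; rewrite !inE memv_cap.
    by rewrite -card_setvs ecap cardsUI c1 c2.
  have hY := @arith4 _ _ _ _ hq hk dcap hYc.
  have h1 : (size D <= size D' + (alpha - 1))%N.
    by move: cntK => /andP[_ h]; rewrite -szD leq_add2l.
  exact: (@arith1 _ _ _ _ _ _ _ h1 IHD' hY hNZ).
- move/existsPn => nofull.
  apply: arith2 => //.
  rewrite -(@sum_count F n k D Z Z0); last first.
    by move=> U UD; split; [apply: hdim; apply: DC | move=> x; apply: DZ].
  rewrite -sum_nat_const; apply: leq_sum => x xZ.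
  have xnz : x != 0 by apply/eqP => x0; move: xZ; rewrite x0 inE Z0.
  move: (nofull x); rewrite xnz /= -ltnNge; move: ha; clear; lia.
Qed.

Lemma rat_conv (q k n s a : nat) : (1 < q)%N -> 
  (s * (q ^ k - 1 + (q - 1)) <= a * (q ^ n - 1))%N ->
  (s%:R <= a%:R * gauss1 q n / (gauss1 q k + 1) :> rat).
Proof.
move=> q1 h.
have qk1 : (1 <= q ^ k)%N by rewrite expn_gt0 (ltnW q1).
have qn1 : (1 <= q ^ n)%N by rewrite expn_gt0 (ltnW q1).
have Qpos : 0 < (q - 1)%:R :> rat by rewrite ltr0n subn_gt0.
have Xpos : 0 < (q ^ k - 1 + (q - 1))%:R :> rat by rewrite ltr0n; lia.
have e : a%:R * gauss1 q n / (gauss1 q k + 1) =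
   (a * (q ^ n - 1))%:R / (q ^ k - 1 + (q - 1))%:R :> rat.
  rewrite /gauss1 !natrM !natrD !natrB // ?(ltnW q1) //.
  rewrite !natrB // ?(ltnW q1) // in Qpos Xpos.
  field.
  rewrite natrD !natrB // ?(ltnW q1) // in Xpos.
  by rewrite !lt0r_neq0.
rewrite e ler_pdivlMr // -natrM ler_nat; exact: h.
Qed.

Theorem mainTheorem5 (F : finFieldType) (n k delta alpha : nat)
  (hn : (0 < n)%N) (hk : (0 < k)%N) (hd : (0 < delta)%N) (hkn : (k <= n)%N)
  (ha3 : (3 <= alpha)%N) (hak : alpha%:R <= gauss1 #|F| k)
  (hdelta : ((alpha - 1) * (k - 1) + 1 <= delta)%N)
  (C : seq {vspace 'rV[F]_n}) (hC : covering_code F n k delta alpha C) :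
  (size C)%:R <= (alpha - 1)%:R * gauss1 #|F| n / (gauss1 #|F| k + 1) :> rat.
Proof.
have hq : (1 < #|F|)%N := card_finNzRing_gt1 F.
have qk1 : (1 <= #|F| ^ k)%N by rewrite expn_gt0 (ltnW hq).
have e1 : #|F|%:R - 1 = (#|F| - 1)%:R :> rat by rewrite natrB ?(ltnW hq).
have e2 : (#|F| ^ k)%:R - 1 = (#|F| ^ k - 1)%:R :> rat by rewrite natrB.
have Qpos : 0 < #|F|%:R - 1 :> rat by rewrite e1 ltr0n subn_gt0.
have hak' : (alpha * (#|F| - 1) <= #|F| ^ k - 1)%N.
  by move: hak; rewrite /gauss1 ler_pdivlMr // e1 e2 -natrM ler_nat.
apply: rat_conv => //.
have := @key F n k delta alpha C hC hk ha3 hdelta hak' hq C [set 0] (set11 _)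
  ltac:(by case: hC) (fun U h => h) ltac:(by move=> U x _ _ /set1P).
have cV := card_mx F 1 n; rewrite mul1n in cV.
rewrite cardsC1 -subn1 => H; apply: (leq_trans H); apply: leq_mul => //; apply: leq_sub2r.
exact: (eq_leq cV).
Qed.
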